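(* Let $G$ be an internally 3-connected graph containing two nontrivial fans $F_1,F_2$ (fans of $G$). If $F_1$ and $F_2$ have a common interior vertex, then they have the same center.
   Context: Graphs are finite and simple. A graph is internally 3-connected if it is obtained from a 3-connected graph by subdividing each edge at most once. Type-I graphs: let $H$ have a specified Hamiltonian cycle $C$; edges not in $C$ are chords; non-incident chords $ab,cd$ cross if $a,c,b,d$ occur in this cyclic order on $C$. $H$ is type-I if every chord crosses at most one other chord and, whenever chords $ab,cd$ cross, either both $ac,bd\in E(C)$ or both $ad,bc\in E(C)$. A fan: a type-I graph $H$ with reference cycle $C$ and two edges $ab,ad$ of $C$ sharing the end $a$ such that every chord joins $a$ to the path $C\setminus a$; its corners are $a,b,d$, its center is $a$, its length is its number of chords; it is nontrivial if its length is at least $2$. A fan of $G$: $J\subseteq G$ is a fan of $G$ if $G$ is obtained from a graph $H'$ by adding the fan $J$, i.e. identifying the corners of $J$ with distinct vertices of $H'$, where $J,H'$ are regarded as subgraphs of $G$ with $V(J\cap H')$ equal to the set $Z$ of corners of $J$ (so every edge of $G$ incident with a vertex of $J\setminus Z$ lies in $J$). Vertices of $J\setminus Z$ are interior vertices of $J$. *)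

(* Defs.v *)
(* Graphs are finite simple graphs whose vertices live in a
   finType T; a (sub)graph is a vertex set V : {set T} with an edge relation. *)
From mathcomp Require Import all_boot.
Set Implicit Arguments. Unset Strict Implicit. Unset Printing Implicit Defensive.

Section Graphs.
Variable T : finType.

Definition graph_wf (V : {set T}) (E : rel T) : Prop :=
  symmetric E /\ irreflexive E /\ (forall x y, E x y -> x \in V).

Definition three_connected (B : {set T}) (h : rel T) : Prop :=
  3 < #|B| /\
  forall S : {set T}, #|S| <= 2 ->
    forall x y, x \in B :\: S -> y \in B :\: S ->
      connect [rel u v | [&& h u v, u \notin S & v \notin S]] x y.

Definition nbhd (e : rel T) (w : T) : {set T} := [set u | e w u].

Definition subdivides_at_most_once (e : rel T) (B : {set T}) (h : rel T) : Prop :=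
  (forall x y, x \in B -> y \in B -> e x y -> h x y) /\
  (* every vertex outside B subdivides an edge uv of H (which is then absent in G) *)
  (forall w, w \notin B -> exists u v,
      [/\ u \in B, v \in B, h u v, ~~ e u v & nbhd e w = [set u; v]]) /\
  (* every edge of H is either kept or subdivided *)
  (forall u v, h u v -> ~~ e u v ->
      exists w, w \notin B /\ nbhd e w = [set u; v]) /\
  (* at most once *)
  (forall w w', w \notin B -> w' \notin B -> nbhd e w = nbhd e w' -> w = w').

Definition internally_3_connected (e : rel T) : Prop :=
  exists (B : {set T}) (h : rel T),
    [/\ graph_wf B h, three_connected B h & subdivides_at_most_once e B h].

(* Reference cycle, given as a duplicate-free sequence c read cyclically. *)
Definition cedge (c : seq T) (x y : T) : bool :=
  [&& x \in c, y \in c & (y == next c x) || (x == next c y)].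

Definition ham_cycle (VJ : {set T}) (eJ : rel T) (c : seq T) : Prop :=
  [/\ uniq c, 2 < size c, (forall x, (x \in c) = (x \in VJ))
    & all (fun x => eJ x (next c x)) c].

Definition chord (eJ : rel T) (c : seq T) (x y : T) : bool :=
  eJ x y && ~~ cedge c x y.

Definition cyc_order4 (c : seq T) (x1 x2 x3 x4 : T) : bool :=
  [&& x1 \in c, x2 \in c, x3 \in c, x4 \in c &
   [exists i : 'I_(size c),
      let s := rot i c in
      [&& index x1 s < index x2 s, index x2 s < index x3 s
        & index x3 s < index x4 s]]].

Definition crossing (eJ : rel T) (c : seq T) (a b x y : T) : bool :=
  [&& chord eJ c a b, chord eJ c x y, uniq [:: a; b; x; y]
    & cyc_order4 c a x b y].

Definition type_I (VJ : {set T}) (eJ : rel T) (c : seq T) : Prop :=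
  ham_cycle VJ eJ c /\
  (* every chord crosses at most one other chord *)
  (forall a b x y x' y', crossing eJ c a b x y -> crossing eJ c a b x' y' ->
      [set x; y] = [set x'; y']) /\
  (forall a b x y, crossing eJ c a b x y ->
      (cedge c a x && cedge c b y) || (cedge c a y && cedge c b x)).

(* (VJ, eJ) with reference cycle c is a fan with center a; its other two
   corners are the cycle neighbours next c a and prev c a. *)
Definition is_fan (VJ : {set T}) (eJ : rel T) (c : seq T) (a : T) : Prop :=
  type_I VJ eJ c /\ a \in c /\
  (forall x y, chord eJ c x y -> (x == a) || (y == a)).

Definition corners (c : seq T) (a : T) : {set T} := [set a; next c a; prev c a].

Definition interior (VJ : {set T}) (c : seq T) (a : T) : {set T} :=
  VJ :\: corners c a.

Definition fan_length (eJ : rel T) (c : seq T) : nat :=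
  #|[set [set p.1; p.2] | p in [set p : T * T | chord eJ c p.1 p.2]]|.

(* (VJ, eJ) (with cycle c and center a) is a fan of G = (T, e):
   G is obtained from some graph H' = (VH, eH) by adding the fan, with
   V(J) ∩ V(H') the set of corners. *)
Definition fan_of (e : rel T) (VJ : {set T}) (eJ : rel T) (c : seq T) (a : T) : Prop :=
  [/\ graph_wf VJ eJ, is_fan VJ eJ c a &
   exists (VH : {set T}) (eH : rel T),
     [/\ graph_wf VH eH, VJ :&: VH = corners c a, VJ :|: VH = [set: T]
       & forall x y, e x y = eJ x y || eH x y]].

Definition nontrivial_fan_of (e : rel T) (VJ : {set T}) (eJ : rel T) (c : seq T) (a : T) : Prop :=
  fan_of e VJ eJ c a /\ 2 <= fan_length eJ c.

End Graphs.

(* Main.v *)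
Require Import Defs.
From mathcomp Require Import all_boot.
Set Implicit Arguments. Unset Strict Implicit. Unset Printing Implicit Defensive.

Section Cyc.
Variable T : eqType.

Lemma cyc_seq (c : seq T) a : uniq c -> a \in c ->
  exists s, [/\ uniq (a :: s), c =i a :: s, next c =1 next (a :: s),
     prev c =1 prev (a :: s) & size s = (size c).-1].
Proof.
move=> hu ha; case: (rot_to ha) => i s hr; exists s.
have hu' : uniq (a :: s) by rewrite -hr rot_uniq.
split => //.
- by move=> x; rewrite -hr mem_rot.
- by move=> x; rewrite -hr next_rot.
- by move=> x; rewrite -hr prev_rot.
- by rewrite -(size_rot i c) hr.
Qed.

Variables (a : T) (s : seq T).
Hypothesis hu : uniq (a :: s).

Lemma nxt_a : next (a :: s) a = nth a s 0.
Proof. by rewrite next_nth mem_head /= eqxx. Qed.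

Lemma prv_a : prev (a :: s) a = nth a (a :: s) (size s).
Proof.
rewrite prev_nth mem_head; congr nth.
have /andP [has _] : (a \notin s) && uniq s := hu; exact: memNindex.
Qed.

Lemma nxt_k k : k < size s -> next (a :: s) (nth a s k) = nth a s k.+1.
Proof.
move=> hk; have /andP [has hus] : (a \notin s) && uniq s := hu.
have hin : nth a s k \in s by rewrite mem_nth.
rewrite next_nth inE hin orbT /=.
have -> : (a == nth a s k) = false by apply/negbTE/eqP => E; move: hin; rewrite -E => hin; rewrite hin in has.
by rewrite index_uniq.
Qed.

Lemma prv_k k : k < size s -> prev (a :: s) (nth a s k) = nth a (a :: s) k.
Proof.
move=> hk; have /andP [has hus] : (a \notin s) && uniq s := hu.
have hin : nth a s k \in s by rewrite mem_nth.
by rewrite prev_nth inE hin orbT /= index_uniq.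
Qed.

Lemma nth_inj i j : i < size s -> j < size s -> nth a s i = nth a s j -> i = j.
Proof.
move=> hi hj E; have /andP [_ hus] : (a \notin s) && uniq s := hu.
by apply/eqP; rewrite -(nth_uniq a hi hj hus) E.
Qed.

End Cyc.

Lemma next_neq_prev (T : eqType) (c : seq T) x : uniq c -> 2 < size c -> x \in c ->
  next c x != prev c x.
Proof.
move=> hu hs hx; have [s [hu' _ hn hp hsz]] := cyc_seq hu hx.
rewrite hn hp nxt_a // prv_a //.
have hs2 : 1 < size s by rewrite hsz; case: (size c) hs => // n; rewrite ltnS.
case: (size s) hs2 (nth_inj hu') => [|[|n]] // _ hinj.
rewrite /=; apply/eqP => /hinj; by move=> h; have := h isT (leqnn _).
Qed.

Section Fan.
Variables (T : finType) (e : rel T) (V : {set T}) (eJ : rel T) (c : seq T) (a : T).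
Hypothesis e_sym : symmetric e.
Hypothesis hF : fan_of e V eJ c a.

Ltac destr := move: (hF) => [[eJsym [eJirr eJV]] [[[hu hs hm hall] _] [ha hch]]
   [VH [eH [[eHsym [eHirr eHV]] hcap hcup he]]]].

Lemma f_uniq : uniq c. Proof. by destr. Qed.
Lemma f_size : 2 < size c. Proof. by destr. Qed.
Lemma f_a : a \in c. Proof. by destr. Qed.

Lemma inQ x : (x \in interior V c a) =
   [&& x \in c, x != a, x != next c a & x != prev c a].
Proof.
destr; rewrite /interior /corners in_setD !inE -hm.
by case: (x \in c); case: (x == a); case: (x == next c a); case: (x == prev c a).
Qed.

Lemma e_next x : x \in c -> e x (next c x).
Proof. destr => hx; rewrite he; by rewrite (allP hall x hx). Qed.

Lemma e_prev x : x \in c -> e x (prev c x).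
Proof.
destr => hx; rewrite he eJsym.
have := allP hall (prev c x); rewrite mem_prev next_prev //; by move=> ->.
Qed.

Lemma Q_nb x y : x \in interior V c a -> e x y ->
  y \in c /\ [\/ y = next c x, y = prev c x | y = a].
Proof.
destr => hx; rewrite he => /orP [hJ|hH]; last first.
  have : x \in V :&: VH.
    by rewrite inE (eHV _ _ hH) andbT; move: hx; rewrite /interior in_setD => /andP [].
  by rewrite hcap; move: hx; rewrite /interior in_setD => /andP [/negP].
have yc : y \in c by rewrite hm; apply: (eJV y x); rewrite eJsym.
split => //.
case hce: (cedge c x y).
  move: hce; rewrite /cedge => /and3P [_ _ /orP [/eqP->|/eqP hxy]]; first by constructor 1.
  by constructor 2; rewrite hxy prev_next.
have : chord eJ c x y by rewrite /chord hJ hce.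
move/hch => /orP [/eqP xa|/eqP ->]; last by constructor 3.
by move: hx; rewrite inQ xa eqxx andbF.
Qed.

Definition end_of w := if w == next c a then next c w else prev c w.

Lemma Q_end w y : w \in c -> w \notin interior V c a -> w != a ->
  y \in interior V c a -> e y w -> y = end_of w.
Proof.
move=> wc wQ wa yQ eyw.
have hu := f_uniq.
have ya : y != a by move: yQ; rewrite inQ => /and4P [].
move: wQ; rewrite inQ wc wa /= negb_and !negbK => hw.
have [_ [E|E|E]] := Q_nb yQ eyw; last by rewrite E eqxx in wa.
- rewrite /end_of; case: eqP => hwn.
    by move: ya; rewrite -(prev_next hu y) -E hwn prev_next // eqxx.
  rewrite (negbTE (introN eqP hwn)) /= in hw.
  by rewrite E prev_next.
- rewrite /end_of; case: eqP => hwn.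
    by rewrite E next_prev.
  rewrite (negbTE (introN eqP hwn)) /= in hw.
  by move: ya; rewrite -(next_prev hu y) -E (eqP hw) next_prev // eqxx.
Qed.

Lemma center_deg : 1 < fan_length eJ c -> exists z1 z2,
  [/\ z1 \in interior V c a, z2 \in interior V c a, e a z1, e a z2 & z1 != z2].
Proof.
destr => /card_gt1P [X1 [X2 [h1 h2 hne]]].
have key : forall X, X \in [set [set p.1; p.2] | p in [set p : T * T | chord eJ c p.1 p.2]] ->
   exists z, [/\ X = [set a; z], z \in interior V c a & e a z].
  move=> X /imsetP [[x y] /=]; rewrite inE /= => hc ->.
  have hc' := hc.
  move: hc => /andP [hJ hnc].
  have cedge_a : forall z, chord eJ c a z -> z \in interior V c a.
    move=> z /andP [hJz hncz].
    rewrite inQ; have zc : z \in c by rewrite hm; apply: (eJV z a); rewrite eJsym.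
    rewrite zc /=.
    apply/and3P; split.
    - by apply/eqP => E; rewrite E eJirr in hJz.
    - by apply/eqP => E; move: hncz; rewrite /cedge ha zc E eqxx.
    - apply/eqP => E; move: hncz; rewrite /cedge ha zc E next_prev // eqxx.
      by rewrite orbT.
  move: (hch _ _ hc') => /orP [/eqP xa|/eqP ya].
  - exists y; rewrite xa; split => //.
    + by apply: cedge_a; rewrite -xa.
    + by rewrite he -xa hJ.
  - exists x; rewrite ya setUC; split => //.
    + apply: cedge_a; rewrite /chord eJsym -ya hJ /=.
      move: hnc; rewrite /cedge; apply: contra.
      by case/and3P => -> -> /=; rewrite orbC.
    + by rewrite he eJsym -ya hJ.
have [z1 [E1 Q1 e1]] := key _ h1.
have [z2 [E2 Q2 e2]] := key _ h2.
exists z1, z2; split => //.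
by apply: contra hne => /eqP E; rewrite E1 E2 E.
Qed.

End Fan.

From mathcomp Require Import zify.

Lemma nb3 (T : finType) (e : rel T) V eJ c a x y : fan_of e V eJ c a ->
  x \in interior V c a -> e x y -> y \in [:: next c x; prev c x; a].
Proof.
move=> hF hx hxy; have [_ [->|->|->]] := Q_nb hF hx hxy; by rewrite !inE eqxx ?orbT.
Qed.

Section Two.
Variables (T : finType) (e : rel T).
Hypothesis e_sym : symmetric e.
Variables (V1 : {set T}) (e1 : rel T) (c1 : seq T) (a1 : T).
Variables (V2 : {set T}) (e2 : rel T) (c2 : seq T) (a2 : T).
Hypothesis hF1 : fan_of e V1 e1 c1 a1.
Hypothesis hF2 : fan_of e V2 e2 c2 a2.
Local Notation Q1 := (interior V1 c1 a1).
Local Notation Q2 := (interior V2 c2 a2).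

Lemma center_notQ : 1 < fan_length e1 c1 -> a1 \notin Q2.
Proof.
move=> hl; apply/negP => aQ.
have [z1 [z2 [hz1 hz2 ez1 ez2 hne]]] := center_deg hF1 hl.
have hnp := next_neq_prev (f_uniq hF1) (f_size hF1) (f_a hF1).
move: (hz1) (hz2); rewrite !(inQ hF1) => /and4P [_ _ n1 p1] /and4P [_ _ n2 p2].
have : size [:: next c1 a1; prev c1 a1; z1; z2] <= size [:: next c2 a1; prev c2 a1; a2].
  apply: uniq_leq_size.
    rewrite /= !inE !negb_or hnp.
    by rewrite ![next c1 a1 == _]eq_sym ![prev c1 a1 == _]eq_sym n1 n2 p1 p2 hne.
  move=> y hy; apply: (nb3 hF2 aQ); move: hy; rewrite !inE => /or4P [] /eqP ->.
  - exact: (e_next hF1 (f_a hF1)).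
  - exact: (e_prev hF1 (f_a hF1)).
  - exact: ez1.
  - exact: ez2.
by [].
Qed.

Lemma step3 t : t \in Q1 -> t \in Q2 -> e t a2 -> e t a1.
Proof.
move=> t1 t2 ta2; case h: (e t a1) => //.
have hu2 := f_uniq hF2.
have tc2 : t \in c2 by move: t2; rewrite (inQ hF2) => /and4P [].
have : size [:: next c2 t; prev c2 t; a2] <= size [:: next c1 t; prev c1 t].
  apply: uniq_leq_size.
    rewrite /= !inE !negb_or (next_neq_prev hu2 (f_size hF2) tc2) /= andbT.
    move: t2; rewrite (inQ hF2) => /and4P [_ _ hn hp].
    apply/andP; split; apply/eqP => E.
    + by move: hp; rewrite -E prev_next // eqxx.
    + by move: hn; rewrite -E next_prev // eqxx.
  move=> y hy.
  have ety : e t y.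
    move: hy; rewrite !inE => /or3P [] /eqP ->.
    - exact: (e_next hF2 tc2).
    - exact: (e_prev hF2 tc2).
    - exact: ta2.
  have := nb3 hF1 t1 ety; rewrite !inE => /or3P [] /eqP E.
  + by rewrite E eqxx.
  + by rewrite E eqxx orbT.
  + by rewrite E h in ety.
by [].
Qed.

Lemma SL x y : a1 != a2 -> a1 \notin Q2 -> x \in Q1 -> y \in Q2 -> y \notin Q1 ->
  e x y -> [/\ y = next c1 a1 \/ y = prev c1 a1, a1 \in c2 & y = end_of c2 a2 a1].
Proof.
move=> h12 a1Q x1 y2 y1 exy.
have [yc1 _] := Q_nb hF1 x1 exy.
have ya1 : y != a1 by apply: contraNneq a1Q => <-.
have hy : y = next c1 a1 \/ y = prev c1 a1.
  move: y1; rewrite (inQ hF1) yc1 ya1 /= negb_and !negbK.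
  by case/orP => /eqP; [left|right].
have eya : e y a1.
  case: hy => ->; rewrite e_sym.
  - exact: (e_next hF1 (f_a hF1)).
  - exact: (e_prev hF1 (f_a hF1)).
have [a1c2 _] := Q_nb hF2 y2 eya.
split => //.
exact: (Q_end hF2 a1c2 a1Q h12 y2 eya).
Qed.

Ltac gen_atom t := let n := fresh "n" in let E := fresh "E" in
  destruct (@exist nat (fun m => t = m) t (erefl t)) as [n E]; rewrite E; clear E.

Ltac mlia := repeat match goal with H : ?P |- _ =>
   lazymatch P with is_true (leq _ _) => revert H | @eq nat _ _ => revert H | ~ (@eq nat _ _) => revert H | _ => clear H end end;
   repeat match goal with
   | |- context [@size ?X ?l] => gen_atom (@size X l)
   | |- context [@index ?X ?x ?l] => gen_atom (@index X x l) end; intros; lia.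

Lemma Wlem v z : a1 != a2 -> a1 \notin Q2 -> v \in Q1 -> v \in Q2 -> z \in Q2 ->
  z \notin Q1 -> z = next c1 a1 \/ z = prev c1 a1.
Proof.
move=> h12 a1Q v1 v2 z2 z1.
have [s [hu hmem hn hp hsz]] := cyc_seq (f_uniq hF2) (f_a hF2).
have hN : 1 < size s by have := f_size hF2; rewrite hsz; case: (size c2) => [|[|[|n]]].
have has : a2 \notin s by have /andP [] : (a2 \notin s) && uniq s := hu.
have hna : next c2 a2 = nth a2 s 0 by rewrite hn nxt_a.
have hpa : prev c2 a2 = nth a2 s (size s).-1.
  by rewrite hp prv_a //; case: (size s) hN => [|n].
have hQs : forall k, 0 < k -> k < (size s).-1 -> nth a2 s k \in Q2.
  move=> k hk1 hk2; rewrite (inQ hF2) hmem hna hpa inE mem_nth ?orbT; last by mlia.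
  rewrite /=; apply/and3P; split; apply/eqP => E.
  - by move: has; rewrite -E mem_nth //; mlia.
  - have h : k = 0 by apply: (nth_inj hu _ _ E); mlia.
    by mlia.
  - have h : k = (size s).-1 by apply: (nth_inj hu _ _ E); mlia.
    by mlia.
have hsQ : forall x, x \in Q2 -> [/\ x \in s, 0 < index x s, index x s < (size s).-1
     & nth a2 s (index x s) = x].
  move=> x; rewrite (inQ hF2) hmem inE hna hpa => /and4P [/orP [/eqP->|xs] xa xn xp].
    by rewrite eqxx in xa.
  have hi : index x s < size s by rewrite index_mem.
  have E := nth_index a2 xs.
  split => //.
  - case: (posnP (index x s)) => // h0.
    by move: xn; rewrite -{1}E h0 eqxx.
  - case: (index x s =P (size s).-1) => h1; last by mlia.
    by move: xp; rewrite -{1}E h1 eqxx.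
have hend : forall k, nth a2 s k = end_of c2 a2 a1 -> a1 \in c2 -> k < size s ->
    k = 1 \/ k = (size s).-2.
  move=> k hk a1c hks; rewrite /end_of in hk.
  case: eqP hk => [E|NE] hk.
    rewrite E hna hn nxt_k // in hk; last by mlia.
    by left; apply: (nth_inj hu) => //; mlia.
  have hap : a1 = prev c2 a2.
    move: a1Q; rewrite (inQ hF2) a1c h12 /= negb_and !negbK.
    by case/orP => /eqP.
  have : prev c2 a1 = nth a2 s (size s).-2.
    rewrite hap hpa hp prv_k //; last by mlia.
    by case: (size s) hN => [|[|n]].
  move=> E2; rewrite E2 in hk.
  by right; apply: (nth_inj hu) => //; mlia.
have [vs vi0 viN vE] := hsQ v v2.
have [zs zj0 zjN zE] := hsQ z z2.
have fwd : forall d, index v s + d + 2 < size s -> nth a2 s (index v s + d) \in Q1.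
  elim => [|d IH] hd; first by rewrite addn0 vE.
  have hx : nth a2 s (index v s + d) \in Q1 by apply: IH; mlia.
  rewrite addnS; apply/negPn/negP => hy1.
  have hxQ2 : nth a2 s (index v s + d) \in Q2 by apply: hQs; mlia.
  have hyQ2 : nth a2 s (index v s + d).+1 \in Q2 by apply: hQs; mlia.
  have exy : e (nth a2 s (index v s + d)) (nth a2 s (index v s + d).+1).
    rewrite -nxt_k //; last by mlia.
    rewrite -hn; apply: (e_next hF2); rewrite hmem inE mem_nth ?orbT //; mlia.
  have [_ a1c hE] := SL h12 a1Q hx hyQ2 hy1 exy.
  have := hend _ hE a1c; mlia.
have bwd : forall d, d + 2 <= index v s -> nth a2 s (index v s - d) \in Q1.
  elim => [|d IH] hd; first by rewrite subn0 vE.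
  have hx : nth a2 s (index v s - d) \in Q1 by apply: IH; mlia.
  rewrite (_ : index v s - d = (index v s - d.+1).+1) in hx; last by mlia.
  apply/negPn/negP => hy1.
  have hyQ2 : nth a2 s (index v s - d.+1) \in Q2 by apply: hQs; mlia.
  have exy : e (nth a2 s (index v s - d.+1).+1) (nth a2 s (index v s - d.+1)).
    rewrite -[nth a2 s (index v s - d.+1)]/(nth a2 (a2 :: s) (index v s - d.+1).+1).
    rewrite -prv_k //; last by mlia.
    rewrite -hp; apply: (e_prev hF2); rewrite hmem inE mem_nth ?orbT //; mlia.
  have [_ a1c hE] := SL h12 a1Q hx hyQ2 hy1 exy.
  have := hend _ hE a1c; mlia.
move: (index z s) zE zj0 zjN => j zE zj0 zjN.
case: (ltngtP (index v s) (j)) => hij.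
- have hx := fwd ((j).-1 - index v s) ltac:(mlia).
  rewrite (_ : index v s + ((j).-1 - index v s) = (j).-1) in hx; last by mlia.
  have exy : e (nth a2 s (j).-1) z.
    rewrite -zE (_ : nth a2 s (j) = nth a2 s (j).-1.+1); last first.
      by congr nth; mlia.
    rewrite -nxt_k //; last by mlia.
    rewrite -hn; apply: (e_next hF2); rewrite hmem inE mem_nth ?orbT //; mlia.
  by have [] := SL h12 a1Q hx z2 z1 exy.
- have hx := bwd (index v s - (j).+1) ltac:(mlia).
  rewrite (_ : index v s - (index v s - (j).+1) = (j).+1) in hx; last by mlia.
  have exy : e (nth a2 s (j).+1) z.
    rewrite -zE -[nth a2 s (j)]/(nth a2 (a2 :: s) (j).+1).
    rewrite -prv_k //; last by mlia.
    rewrite -hp; apply: (e_prev hF2); rewrite hmem inE mem_nth ?orbT //; mlia.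
  by have [] := SL h12 a1Q hx z2 z1 exy.
- by move: z1; rewrite -zE -hij vE v1.
Qed.

End Two.

Theorem mainTheorem15 (T : finType) (e : rel T)
  (e_sym : symmetric e) (e_irr : irreflexive e)
  (hG : internally_3_connected e)
  (V1 : {set T}) (e1 : rel T) (c1 : seq T) (a1 : T)
  (V2 : {set T}) (e2 : rel T) (c2 : seq T) (a2 : T)
  (hF1 : nontrivial_fan_of e V1 e1 c1 a1)
  (hF2 : nontrivial_fan_of e V2 e2 c2 a2)
  (hcommon : exists v, v \in interior V1 c1 a1 :&: interior V2 c2 a2) :
  a1 = a2.
Proof.
case: hF1 => hf1 hl1; case: hF2 => hf2 hl2.
case: hcommon => v; rewrite inE => /andP [v1 v2].
case: (a1 =P a2) => // /eqP h12; exfalso.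
have a1Q := center_notQ hf1 hf2 hl1.
have [z1 [z2 [hz1 hz2 ez1 ez2 hne]]] := center_deg hf2 hl2.
have key : forall z, z \in interior V2 c2 a2 -> e a2 z -> z = end_of c2 a2 a1.
  move=> z zQ ez.
  have eza1 : e z a1.
    case: (boolP (z \in interior V1 c1 a1)) => zQ1.
      by apply: (step3 hf1 hf2 zQ1 zQ); rewrite e_sym.
    have [->|->] := Wlem e_sym hf1 hf2 h12 a1Q v1 v2 zQ zQ1; rewrite e_sym.
      exact: (e_next hf1 (f_a hf1)).
    exact: (e_prev hf1 (f_a hf1)).
  have [a1c _] := Q_nb hf2 zQ eza1.
  exact: (Q_end hf2 a1c a1Q h12 zQ eza1).
by move: hne; rewrite (key _ hz1 ez1) (key _ hz2 ez2) eqxx.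
Qed.
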